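(* Let $c,d>0$ with $\frac{cd}{c+d}\le1$. Then $\frac12F\!\left(c,d;c+d;\frac12\right)<1$.
   Context: $F(a,b;c;x)$ is the Gaussian hypergeometric function $\sum_{n\ge0}\frac{(a)_n(b)_n}{(c)_n}\frac{x^n}{n!}$ ($|x|<1$), with $(a)_n=a(a+1)\cdots(a+n-1)$, $(a)_0=1$. *)

(* Defs.v *)
From Stdlib Require Import Reals.
Open Scope R_scope.

Fixpoint poch (a : R) (n : nat) : R :=
  match n with
  | O => 1
  | S k => poch a k * (a + INR k)
  end.

Definition hyp_term (a b c x : R) (n : nat) : R :=
  poch a n * poch b n / poch c n * x ^ n / INR (Factorial.fact n).

Definition hyp_F_is (a b c x l : R) : Prop :=
  infinite_sum (hyp_term a b c x) l.

(* Main.v *)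
Require Import Defs.
From Stdlib Require Import Reals Lra Lia Arith.
Open Scope R_scope.

Lemma poch_pos a n : 0 < a -> 0 < poch a n.
Proof.
  intro Ha; induction n as [|n IH]; simpl; [lra|].
  apply Rmult_lt_0_compat; auto. pose proof (pos_INR n); lra.
Qed.

Lemma term_S a b c x n : 0 < a -> 0 < b -> 0 < c ->
  hyp_term a b c x (S n) =
  hyp_term a b c x n * ((a + INR n) * (b + INR n) / ((c + INR n) * (INR n + 1)) * x).
Proof.
  intros Ha Hb Hc. unfold hyp_term.
  pose proof (poch_pos a n Ha). pose proof (poch_pos b n Hb). pose proof (poch_pos c n Hc).
  pose proof (pos_INR n).
  assert (Hf : INR (Factorial.fact (S n)) = (INR n + 1) * INR (Factorial.fact n)).
  { change (Factorial.fact (S n)) with (S n * Factorial.fact n)%nat. rewrite mult_INR, S_INR. reflexivity. }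
  assert (0 < INR (Factorial.fact n)) by (apply lt_0_INR; apply Factorial.lt_O_fact).
  rewrite Hf. simpl poch. simpl pow. field.
  repeat split; lra.
Qed.

Theorem mainTheorem7 (c d : R) (hc : 0 < c) (hd : 0 < d)
  (hcd : c * d / (c + d) <= 1) :
  exists l : R, hyp_F_is c d (c + d) (1/2) l /\ (1/2) * l < 1.
Proof.
  set (t := hyp_term c d (c + d) (1/2)).
  assert (hcd' : c * d <= c + d).
  { apply (Rmult_le_compat_r (c + d)) in hcd; [|lra].
    unfold Rdiv in hcd. rewrite Rmult_assoc, Rinv_l in hcd; lra. }
  assert (tpos : forall n, 0 <= t n).
  { intro n. unfold t, hyp_term.
    pose proof (poch_pos c n hc). pose proof (poch_pos d n hd).
    pose proof (poch_pos (c+d) n ltac:(lra)).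
    assert (0 < INR (Factorial.fact n)) by (apply lt_0_INR; apply Factorial.lt_O_fact).
    assert (0 < (1/2)^n) by (apply pow_lt; lra).
    left. unfold Rdiv. repeat apply Rmult_lt_0_compat; auto; apply Rinv_0_lt_compat; auto. }
  assert (ratio : forall n, t (S n) <= t n / 2).
  { intro n. unfold t. rewrite term_S by lra. fold t.
    pose proof (tpos n). pose proof (pos_INR n).
    assert (Hr : (c + INR n) * (d + INR n) / ((c + d + INR n) * (INR n + 1)) * (1 / 2) <= 1/2).
    { cut ((c + INR n) * (d + INR n) / ((c + d + INR n) * (INR n + 1)) <= 1). lra.
      apply Rmult_le_reg_r with ((c + d + INR n) * (INR n + 1)).
      apply Rmult_lt_0_compat; lra.
      unfold Rdiv. rewrite Rmult_assoc, Rinv_l, Rmult_1_r, Rmult_1_l. 2: { apply Rgt_not_eq, Rmult_lt_0_compat; lra. }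
      nra. }
    unfold Rdiv in *. nra. }
  assert (ratio1 : forall n, (1 <= n)%nat -> t (S n) < t n / 2).
  { intros n Hn. unfold t. rewrite term_S by lra. fold t.
    assert (0 < t n).
    { destruct n; [lia|]. unfold t. rewrite term_S by lra. fold t.
      assert (0 < t n).
      { unfold t, hyp_term.
        pose proof (poch_pos c n hc). pose proof (poch_pos d n hd).
        pose proof (poch_pos (c+d) n ltac:(lra)).
        assert (0 < INR (Factorial.fact n)) by (apply lt_0_INR; apply Factorial.lt_O_fact).
        assert (0 < (1/2)^n) by (apply pow_lt; lra).
        unfold Rdiv. repeat apply Rmult_lt_0_compat; auto; apply Rinv_0_lt_compat; auto. }
      pose proof (pos_INR n).
      apply Rmult_lt_0_compat; auto. apply Rmult_lt_0_compat; [|lra].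
      unfold Rdiv. apply Rmult_lt_0_compat. nra.
      apply Rinv_0_lt_compat; apply Rmult_lt_0_compat; lra. }
    assert (1 <= INR n) by (apply (le_INR 1); auto).
    assert (Hr : (c + INR n) * (d + INR n) / ((c + d + INR n) * (INR n + 1)) * (1 / 2) < 1/2).
    { cut ((c + INR n) * (d + INR n) / ((c + d + INR n) * (INR n + 1)) < 1). lra.
      apply Rmult_lt_reg_r with ((c + d + INR n) * (INR n + 1)).
      apply Rmult_lt_0_compat; lra.
      unfold Rdiv. rewrite Rmult_assoc, Rinv_l, Rmult_1_r, Rmult_1_l. 2: { apply Rgt_not_eq, Rmult_lt_0_compat; lra. }
      nra. }
    unfold Rdiv in *. nra. }
  set (S := sum_f_R0 t).
  set (g := fun n => S n + t n).
  assert (gdec : forall n, g (Datatypes.S n) <= g n).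
  { intro n. unfold g, S. simpl sum_f_R0. pose proof (ratio n). lra. }
  assert (g0 : g 0%nat = 2).
  { unfold g, S. simpl. unfold t, hyp_term. simpl. lra. }
  assert (g2 : g 2%nat < 2).
  { pose proof (gdec 0%nat). pose proof (ratio1 1%nat ltac:(lia)).
    unfold g, S in *. simpl sum_f_R0 in *. lra. }
  assert (gmono : forall k n, g (k + n)%nat <= g n).
  { induction k; intro n; simpl. lra. pose proof (gdec (k+n)%nat). pose proof (IHk n). lra. }
  assert (Sb : forall n, S n <= g 2%nat).
  { intro n. destruct (le_lt_dec 2 n) as [H|H].
    - replace n with ((n-2) + 2)%nat by lia. pose proof (gmono (n-2)%nat 2%nat).
      pose proof (tpos (n - 2 + 2)%nat). unfold g in *. lra.
    - assert (Hg : S n <= S 2%nat).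
      { unfold S. destruct n as [|[|]]; simpl; try lia;
        pose proof (tpos 0%nat); pose proof (tpos 1%nat); pose proof (tpos 2%nat); lra. }
      pose proof (tpos 2%nat). unfold g. lra. }
  assert (Sgrow : Un_growing S).
  { intro n. unfold S. simpl. pose proof (tpos (Datatypes.S n)). lra. }
  assert (Sub : has_ub S).
  { exists (g 2%nat). intros x [i ->]. apply Sb. }
  destruct (growing_cv S Sgrow Sub) as [l Hl].
  exists l. split. exact Hl.
  assert (l <= g 2%nat).
  { destruct (Rle_or_lt l (g 2%nat)) as [|Hlt]; auto.
    destruct (Hl (l - g 2%nat) ltac:(lra)) as [N HN].
    specialize (HN N (le_n N)). unfold Rdist in HN. pose proof (Sb N).
    apply Rabs_def2 in HN. lra. }
  lra.
Qed.
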